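(* Let $g$ be a $C^1$ function near $0$ in $\mathbb{R}$ with $g(0)=0$, $g'(0)>0$, and let $V(x)=\int_0^x g(s)\,ds$. Let $J\ni 0$ be an open interval such that $V$ is strictly increasing on $J\cap(0,\infty)$, strictly decreasing on $J\cap(-\infty,0)$, and for each $x\in J$ there is a unique $h(x)\in J$ with $V(h(x))=V(x)$ and $\operatorname{sgn}h(x)=-\operatorname{sgn}x$. Fix $x_0\in J$ with $x_0>0$, let $t\mapsto X(t,x_0)$ be the (periodic) solution of $\ddot x=-g(x)$ with $X(0,x_0)=x_0$, $\partial_tX(0,x_0)=0$, and let $\mathcal T(x_0)$ be its period. Consider the $\mathcal T(x_0)$-periodic linear equation \[ \ddot y=-g'\big(X(t,x_0)\big)\,y . \] Then either all solutions of this equation are $\mathcal T(x_0)$-periodic, or all its solutions are unbounded except those proportional to $t\mapsto\partial_tX(t,x_0)$. A necessary and sufficient condition for the former case is $\mathcal T'(x_0)=0$.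
   Context: $\mathcal T$ is $C^1$ on $\{x_0\in J:x_0>0\}$, so $\mathcal T'(x_0)$ is defined. *)

(* Defs.v *)
From Stdlib Require Import Reals Lra.
From Coquelicot Require Import Coquelicot.
Open Scope R_scope.

Definition sgn (x : R) : R :=
  if Rlt_dec 0 x then 1 else if Rlt_dec x 0 then -1 else 0.

Definition in_interval (a b : Rbar) (x : R) : Prop := Rbar_lt a x /\ Rbar_lt x b.

Definition potential (g : R -> R) (x : R) : R := RInt g 0 x.

Definition solves_ivp (g : R -> R) (x0 : R) (f : R -> R) : Prop :=
  exists df : R -> R,
    (forall t, is_derive f t (df t) /\ is_derive df t (- g (f t))) /\
    f 0 = x0 /\ df 0 = 0.

Definition periodic (f : R -> R) (T : R) : Prop := forall t, f (t + T) = f t.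

Definition is_min_period (f : R -> R) (T : R) : Prop :=
  0 < T /\ periodic f T /\ (forall T', 0 < T' -> periodic f T' -> T <= T').

Definition lin_sol (q : R -> R) (y : R -> R) : Prop :=
  exists dy : R -> R,
    forall t, is_derive y t (dy t) /\ is_derive dy t (- q t * y t).

Definition unbounded (y : R -> R) : Prop :=
  ~ (exists M, forall t, Rabs (y t) <= M).

(* Main.v *)
Require Import Defs.
From Stdlib Require Import Reals Lra Classical.
From Coquelicot Require Import Coquelicot.
Open Scope R_scope.


Lemma D_plus (f g : R -> R) (x df dg : R) : is_derive f x df -> is_derive g x dg ->
  is_derive (fun t => f t + g t) x (df + dg).
Proof. intros; now apply (is_derive_plus f g). Qed.
Lemma D_minus (f g : R -> R) (x df dg : R) : is_derive f x df -> is_derive g x dg ->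
  is_derive (fun t => f t - g t) x (df - dg).
Proof. intros; now apply (is_derive_minus f g). Qed.
Lemma D_mult (f g : R -> R) (x df dg : R) : is_derive f x df -> is_derive g x dg ->
  is_derive (fun t => f t * g t) x (df * g x + f x * dg).
Proof. intros Hf Hg. apply (is_derive_mult f g); auto. intros; apply Rmult_comm. Qed.
Lemma D_opp (f : R -> R) (x df : R) : is_derive f x df -> is_derive (fun t => - f t) x (- df).
Proof. intros H; exact (is_derive_opp f x df H). Qed.
Lemma D_const (c x : R) : is_derive (fun _ : R => c) x 0.
Proof. apply (@is_derive_const R_AbsRing R_NormedModule c x). Qed.
Lemma D_id (x : R) : is_derive (fun t : R => t) x 1.
Proof. apply (@is_derive_id R_AbsRing x). Qed.
Lemma D_eq (f : R -> R) (x l l' : R) : is_derive f x l -> l = l' -> is_derive f x l'.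
Proof. intros H ->; exact H. Qed.
Lemma D_comp (f g : R -> R) (x df dg : R) : is_derive f (g x) df -> is_derive g x dg ->
  is_derive (fun t => f (g t)) x (dg * df).
Proof. intros; now apply (is_derive_comp f g). Qed.
Lemma D_ext (f g : R -> R) (x l : R) : (forall t, f t = g t) -> is_derive f x l -> is_derive g x l.
Proof. intros H; apply is_derive_ext; exact H. Qed.
Lemma D_sq2 (f g : R -> R) (x df dg : R) : is_derive f x df -> is_derive g x dg ->
  is_derive (fun t => f t ^ 2 + g t ^ 2) x (2 * f x * df + 2 * g x * dg).
Proof.
  intros Hf Hg. eapply D_eq. apply D_plus; apply is_derive_pow; eassumption.
  simpl; ring.
Qed.

Lemma der_cont (f : R -> R) (x l : R) : is_derive f x l -> continuous f x.
Proof. intros H; apply (@ex_derive_continuous R_AbsRing R_NormedModule); exists l; exact H. Qed.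

Lemma cont_eps (f : R -> R) (x : R) : continuous f x -> forall eps, 0 < eps ->
  exists d, 0 < d /\ forall y, Rabs (y - x) < d -> Rabs (f y - f x) < eps.
Proof.
  intros Hc eps He.
  apply continuity_pt_filterlim in Hc.
  destruct (proj1 (continuity_pt_locally f x) Hc (mkposreal eps He)) as [d Hd].
  exists d; split. apply cond_pos. intros y Hy. apply Hd. exact Hy.
Qed.

Lemma nonincr (f df : R -> R) (a b : R) : a <= b -> (forall t, a <= t <= b -> is_derive f t (df t)) ->
  (forall t, a <= t <= b -> df t <= 0) -> f b <= f a.
Proof.
  intros Hab Hd Hn.
  destruct (MVT_gen f a b df) as [c [Hc Heq]].
  - intros x Hx. apply Hd. rewrite Rmin_left in Hx by lra. rewrite Rmax_right in Hx by lra. lra.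
  - intros x Hx. apply continuity_pt_filterlim. apply (der_cont f x (df x)). apply Hd.
    rewrite Rmin_left in Hx by lra. rewrite Rmax_right in Hx by lra. lra.
  - rewrite Rmin_left in Hc by lra. rewrite Rmax_right in Hc by lra.
    assert (df c <= 0) by (apply Hn; lra). nra.
Qed.

Lemma gronwall (phi dphi : R -> R) (C K L : R) : 0 < C -> 0 <= K ->
  (forall t, 0 <= t <= L -> is_derive phi t (dphi t)) ->
  (forall t, 0 <= t <= L -> dphi t <= C * phi t + K) ->
  forall t, 0 <= t <= L -> phi t <= (phi 0 + K / C) * exp (C * t).
Proof.
  intros HC HK Hd Hb t Ht.
  set (psi := fun s => (phi s + K / C) * exp (- C * s)).
  set (dpsi := fun s => (dphi s - C * phi s - K) * exp (- C * s)).
  assert (H : psi t <= psi 0).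
  { apply (nonincr psi dpsi 0 t). lra.
    - intros s Hs. unfold psi, dpsi. eapply D_eq.
      apply D_mult. apply D_plus. apply Hd; lra. apply D_const.
      apply (D_comp exp (fun s => - C * s)). apply is_derive_exp.
      eapply D_eq. apply is_derive_scal. apply D_id. reflexivity.
      cbv beta. field. lra.
    - intros s Hs. unfold dpsi. assert (0 < exp (- C * s)) by apply exp_pos.
      assert (dphi s <= C * phi s + K) by (apply Hb; lra). nra. }
  unfold psi in H. rewrite Rmult_0_r, exp_0, Rmult_1_r in H.
  assert (E : exp (- C * t) * exp (C * t) = 1).
  { rewrite <- exp_plus. replace (- C * t + C * t) with 0 by ring. apply exp_0. }
  assert (0 < exp (C * t)) by apply exp_pos.
  assert (0 <= K / C) by (apply Rdiv_le_0_compat; lra).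
  assert ((phi t + K / C) * exp (- C * t) * exp (C*t) <= (phi 0 + K / C) * exp (C * t)) by nra.
  rewrite Rmult_assoc, E, Rmult_1_r in H2. lra.
Qed.

Lemma stay_lemma (f : R -> R) (lo hi : R) :
  (forall t, continuous f t) -> lo <= f 0 <= hi ->
  (forall s, 0 <= s -> (forall u, 0 <= u <= s -> lo <= f u <= hi) ->
     exists eta, 0 < eta /\ forall u, 0 <= u <= s + eta -> lo <= f u <= hi) ->
  forall t, 0 <= t -> lo <= f t <= hi.
Proof.
  intros Hc H0 Hstep t1 Ht1.
  destruct (classic (lo <= f t1 <= hi)) as [Hok|Hbad]; [exact Hok|exfalso].
  set (E := fun s => 0 <= s <= t1 /\ forall u, 0 <= u <= s -> lo <= f u <= hi).
  assert (Hb : bound E) by (exists t1; intros s [Hs _]; lra).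
  assert (He : exists x, E x).
  { exists 0; split; [lra|]. intros u Hu. replace u with 0 by lra. exact H0. }
  destruct (completeness E Hb He) as [S [HS1 HS2]].
  assert (HS0 : 0 <= S) by (apply HS1; destruct He as [_ _]; split; [lra|]; intros u Hu; replace u with 0 by lra; exact H0).
  assert (HSt : S <= t1) by (apply HS2; intros s [Hs _]; lra).
  assert (HA : forall u, 0 <= u < S -> lo <= f u <= hi).
  { intros u Hu. destruct (classic (lo <= f u <= hi)) as [ok|nok]; [exact ok|exfalso].
    assert (S <= u); [|lra]. apply HS2. intros s [Hs Hs2].
    destruct (Rle_lt_dec s u) as [l|l]; [exact l|]. exfalso; apply nok; apply Hs2; lra. }
  assert (HSin : lo <= f S <= hi).
  { destruct (Req_dec S 0) as [E0|E0]. { rewrite E0; exact H0. }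
    split.
    - destruct (Rle_lt_dec lo (f S)) as [l|l]; [exact l|exfalso].
      destruct (cont_eps f S (Hc S) (lo - f S)) as [d [Hd Hd2]]; [lra|].
      set (u := S - Rmin d S / 2).
      assert (0 < Rmin d S) by (apply Rmin_pos; lra).
      assert (Rmin d S <= d) by apply Rmin_l. assert (Rmin d S <= S) by apply Rmin_r.
      assert (Hu : Rabs (u - S) < d) by (unfold u; rewrite Rabs_left; lra).
      specialize (Hd2 u Hu). specialize (HA u). assert (lo <= f u) by (apply HA; unfold u; lra).
      apply Rabs_def2 in Hd2. lra.
    - destruct (Rle_lt_dec (f S) hi) as [l|l]; [exact l|exfalso].
      destruct (cont_eps f S (Hc S) (f S - hi)) as [d [Hd Hd2]]; [lra|].
      set (u := S - Rmin d S / 2).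
      assert (0 < Rmin d S) by (apply Rmin_pos; lra).
      assert (Rmin d S <= d) by apply Rmin_l. assert (Rmin d S <= S) by apply Rmin_r.
      assert (Hu : Rabs (u - S) < d) by (unfold u; rewrite Rabs_left; lra).
      specialize (Hd2 u Hu). specialize (HA u). assert (f u <= hi) by (apply HA; unfold u; lra).
      apply Rabs_def2 in Hd2. lra. }
  assert (HAll : forall u, 0 <= u <= S -> lo <= f u <= hi).
  { intros u Hu. destruct (Req_dec u S) as [->|ne]; [exact HSin|apply HA; lra]. }
  destruct (Req_dec S t1) as [ES|ES].
  - apply Hbad. apply HAll. lra.
  - destruct (Hstep S HS0 HAll) as [eta [Heta Heta2]].
    set (s' := Rmin (S + eta) t1).
    assert (s' <= S + eta) by apply Rmin_l. assert (s' <= t1) by apply Rmin_r.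
    assert (S < s') by (unfold s'; apply Rmin_glb_lt; lra).
    assert (E s') by (split; [lra|]; intros u Hu; apply Heta2; lra).
    specialize (HS1 s' H3). lra.
Qed.

Lemma periodic_nat (f : R -> R) (T : R) : periodic f T ->
  forall n t, f (t + INR n * T) = f t.
Proof.
  intros Hp n; induction n as [|n IH]; intros t.
  - simpl. f_equal; ring.
  - rewrite S_INR. replace (t + (INR n + 1) * T) with ((t + INR n * T) + T) by ring.
    rewrite Hp. apply IH.
Qed.

Lemma periodic_shift_pos (f : R -> R) (T : R) : 0 < T -> periodic f T ->
  forall t s, exists t', s <= t' /\ f t = f t'.
Proof.
  intros HT Hp t s.
  destruct (INR_archimed T (s - t) HT) as [n Hn].
  exists (t + INR n * T). split; [lra|]. symmetry; apply periodic_nat; exact Hp.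
Qed.

Lemma periodic_derive (f : R -> R) (T : R) : periodic f T ->
  (forall t, ex_derive f t) -> forall t, Derive f (t + T) = Derive f t.
Proof.
  intros Hp Hd t.
  assert (H : is_derive (fun s => f (s + T)) t (1 * Derive f (t + T))).
  { apply (D_comp f (fun s => s + T)). apply Derive_correct, Hd.
    eapply D_eq. apply D_plus. apply D_id. apply D_const. ring. }
  rewrite Rmult_1_l in H.
  symmetry. apply is_derive_unique. eapply D_ext; [|exact H]. intros s; apply Hp.
Qed.

Lemma prod_bound (a b c M : R) : Rabs c <= M -> 2 * c * a * b <= M * (a^2 + b^2).
Proof.
  intros Hc.
  assert (H1 : c * a * b <= Rabs c * Rabs a * Rabs b).
  { rewrite <- !Rabs_mult. apply Rle_abs. }
  assert (H2 : 2 * Rabs a * Rabs b <= a^2 + b^2).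
  { assert (Rabs a ^ 2 = a ^ 2) by apply pow2_abs.
    assert (Rabs b ^ 2 = b ^ 2) by apply pow2_abs.
    assert (0 <= (Rabs a - Rabs b)^2) by apply pow2_ge_0. nra. }
  assert (0 <= Rabs a) by apply Rabs_pos. assert (0 <= Rabs b) by apply Rabs_pos.
  assert (0 <= Rabs c) by apply Rabs_pos.
  nra.
Qed.

Lemma sq_abs_le (a b : R) : 0 <= b -> a^2 <= b^2 -> Rabs a <= b.
Proof.
  intros Hb H. assert (Rabs a ^ 2 = a ^ 2) by apply pow2_abs.
  assert (0 <= Rabs a) by apply Rabs_pos. nra.
Qed.

Lemma lin_unique_fwd (q y dy : R -> R) (M : R) : 0 <= M ->
  (forall t, Rabs (q t) <= M) ->
  (forall t, is_derive y t (dy t) /\ is_derive dy t (- q t * y t)) ->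
  y 0 = 0 -> dy 0 = 0 -> forall t, 0 <= t -> y t = 0 /\ dy t = 0.
Proof.
  intros HM Hq Hd Hy0 Hdy0 t Ht.
  assert (H := gronwall (fun s => y s ^ 2 + dy s ^ 2)
     (fun s => 2 * y s * dy s + 2 * dy s * (- q s * y s)) (1 + M) 0 t).
  assert (Hle : y t ^ 2 + dy t ^ 2 <= 0).
  { eapply Rle_trans. apply H; try lra.
    - intros s _. apply D_sq2; apply Hd.
    - intros s _. assert (2 * (- q s) * y s * dy s <= M * (y s ^2 + dy s ^2)).
      { apply prod_bound. rewrite Rabs_Ropp. apply Hq. }
      assert (0 <= (y s - dy s)^2) by apply pow2_ge_0. lra.
    - cbv beta. rewrite Hy0, Hdy0. right. field. lra. }
  split; nra.
Qed.

Lemma lin_unique (q y dy : R -> R) (M : R) : 0 <= M ->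
  (forall t, Rabs (q t) <= M) ->
  (forall t, is_derive y t (dy t) /\ is_derive dy t (- q t * y t)) ->
  y 0 = 0 -> dy 0 = 0 -> forall t, y t = 0.
Proof.
  intros HM Hq Hd Hy0 Hdy0 t.
  destruct (Rle_lt_dec 0 t) as [Ht|Ht].
  - apply (lin_unique_fwd q y dy M); auto.
  - assert (H := lin_unique_fwd (fun s => q (- s)) (fun s => y (- s)) (fun s => - dy (- s)) M HM).
    replace t with (- (- t)) by ring. apply H; auto; cbv beta.
    + intros s. split.
      * eapply D_eq. apply (D_comp y (fun s => - s)). apply Hd.
        apply D_opp, D_id. ring.
      * eapply D_eq. apply D_opp. apply (D_comp dy (fun s => - s)). apply Hd.
        apply D_opp, D_id. ring.
    + rewrite Ropp_0; exact Hy0.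
    + rewrite Ropp_0, Hdy0; ring.
    + lra.
Qed.

Lemma ii_conv a b p r y : in_interval a b p -> in_interval a b r -> p <= y <= r ->
  in_interval a b y.
Proof.
  unfold in_interval; destruct a, b; simpl; intros; lra.
Qed.

Lemma ii_open a b y : in_interval a b y -> exists e, 0 < e /\
  forall z, Rabs (z - y) < e -> in_interval a b z.
Proof.
  unfold in_interval; destruct a as [a| |], b as [b| |]; simpl; intros [H1 H2];
  try contradiction.
  - exists (Rmin (y - a) (b - y)). split. apply Rmin_pos; lra.
    intros z Hz. assert (Rmin (y - a) (b - y) <= y - a) by apply Rmin_l.
    assert (Rmin (y - a) (b - y) <= b - y) by apply Rmin_r.
    apply Rabs_def2 in Hz. lra.
  - exists (y - a). split. lra. intros z Hz. apply Rabs_def2 in Hz. lra.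
  - exists (b - y). split. lra. intros z Hz. apply Rabs_def2 in Hz. lra.
  - exists 1. split. lra. auto.
Qed.

Lemma ii_0 a b : Rbar_lt a 0 -> Rbar_lt 0 b -> in_interval a b 0.
Proof. intros; split; auto. Qed.

Lemma V_derive (g : R -> R) a b : Rbar_lt a 0 -> Rbar_lt 0 b ->
  (forall z, in_interval a b z -> continuous g z) ->
  forall y, in_interval a b y -> is_derive (potential g) y (g y).
Proof.
  intros Ha Hb Hgc y Hy.
  apply (is_derive_RInt g (fun z => RInt g 0 z) 0 y); [|apply Hgc, Hy].
  destruct (ii_open a b y Hy) as [e [He He2]].
  exists (mkposreal e He). intros z Hz.
  change (Rabs (z - y) < e) in Hz.
  apply (@RInt_correct R_CompleteNormedModule). apply (@ex_RInt_continuous R_CompleteNormedModule). intros w Hw. apply Hgc.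
  assert (Hz' : in_interval a b z) by (apply He2; exact Hz).
  assert (H0 := ii_0 a b Ha Hb).
  destruct (Rle_dec 0 z).
  - rewrite Rmin_left, Rmax_right in Hw by lra. apply (ii_conv a b 0 z); auto.
  - rewrite Rmin_right, Rmax_left in Hw by lra. apply (ii_conv a b z 0); auto.
Qed.

Lemma energy_const (g : R -> R) a b (f df : R -> R) x t :
  Rbar_lt a 0 -> Rbar_lt 0 b ->
  (forall z, in_interval a b z -> continuous g z) ->
  (forall t, is_derive f t (df t) /\ is_derive df t (- g (f t))) ->
  f 0 = x -> df 0 = 0 -> 0 <= t ->
  (forall u, 0 <= u <= t -> in_interval a b (f u)) ->
  df t ^ 2 / 2 + potential g (f t) = potential g x.
Proof.
  intros Ha Hb Hgc Hd Hf0 Hdf0 Ht HJ.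
  set (E := fun u => / 2 * df u ^ 2 + potential g (f u)).
  assert (HE : forall u, 0 <= u <= t -> is_derive E u 0).
  { intros u Hu. unfold E. eapply D_eq. apply D_plus.
    apply (is_derive_scal (fun u => df u ^ 2) u (/2)). apply is_derive_pow. apply Hd.
    apply (D_comp (potential g) f). apply (V_derive g a b); auto. apply Hd.
    simpl. field. }
  assert (E1 : E t <= E 0) by (apply (nonincr E (fun _ => 0)); auto; intros; lra).
  assert (E2 : (fun u => - E u) t <= (fun u => - E u) 0).
  { apply (nonincr (fun u => - E u) (fun _ => 0)); auto.
    intros u Hu. eapply D_eq. apply D_opp, HE, Hu. ring. intros; lra. }
  cbv beta in E2. unfold E in E1, E2. rewrite Hdf0, Hf0 in E1, E2. 
  replace (0 ^ 2) with 0 in * by ring. lra.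
Qed.

Lemma energy_stay (g : R -> R) a b (f df : R -> R) x hx :
  Rbar_lt a 0 -> Rbar_lt 0 b ->
  (forall z, in_interval a b z -> continuous g z) ->
  (forall x y, in_interval a b x -> in_interval a b y ->
            0 < x -> x < y -> potential g x < potential g y) ->
  (forall x y, in_interval a b x -> in_interval a b y ->
            x < y -> y < 0 -> potential g y < potential g x) ->
  in_interval a b x -> 0 < x -> in_interval a b hx -> hx < 0 ->
  potential g hx = potential g x ->
  (forall t, is_derive f t (df t) /\ is_derive df t (- g (f t))) ->
  f 0 = x -> df 0 = 0 ->
  forall t, 0 <= t -> (hx <= f t <= x) /\ df t ^ 2 / 2 + potential g (f t) = potential g x.
Proof.
  intros Ha Hb Hgc Hinc Hdec Hx Hx0 Hhx Hhx0 HV Hd Hf0 Hdf0.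
  assert (Hcf : forall t, continuous f t) by (intros t; apply (der_cont f t (df t)), Hd).
  assert (Hrange : forall t, 0 <= t -> hx <= f t <= x).
  { apply stay_lemma; auto. rewrite Hf0; lra.
    intros s Hs Hin.
    assert (HfsJ : in_interval a b (f s)) by (apply (ii_conv a b hx x); auto; apply Hin; lra).
    destruct (ii_open a b (f s) HfsJ) as [e [He He2]].
    destruct (cont_eps f s (Hcf s) e He) as [d [Hd0 Hd2]].
    exists (d / 2). split. lra.
    assert (HJ : forall u, 0 <= u <= s + d / 2 -> in_interval a b (f u)).
    { intros u Hu. destruct (Rle_dec u s).
      - apply (ii_conv a b hx x); auto. apply Hin; lra.
      - apply He2. apply Hd2. rewrite Rabs_right; lra. }
    intros u Hu.
    assert (HE := energy_const g a b f df x u Ha Hb Hgc Hd Hf0 Hdf0 (proj1 Hu)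
                   (fun w Hw => HJ w (conj (proj1 Hw) (Rle_trans _ _ _ (proj2 Hw) (proj2 Hu))))).
    assert (HVle : potential g (f u) <= potential g x).
    { assert (0 <= df u ^ 2 / 2) by (assert (0 <= df u ^ 2) by apply pow2_ge_0; lra). lra. }
    assert (HfuJ := HJ u Hu).
    split.
    - destruct (Rle_lt_dec hx (f u)) as [l|l]; [exact l|exfalso].
      assert (potential g hx < potential g (f u)) by (apply Hdec; auto). lra.
    - destruct (Rle_lt_dec (f u) x) as [l|l]; [exact l|exfalso].
      assert (potential g x < potential g (f u)) by (apply Hinc; auto). lra. }
  intros t Ht. split. apply Hrange, Ht.
  apply (energy_const g a b f df x t Ha Hb Hgc Hd Hf0 Hdf0 Ht).
  intros u Hu. apply (ii_conv a b hx x); auto. apply Hrange; lra.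
Qed.

Lemma C_mult (f g : R -> R) x : continuous f x -> continuous g x -> continuous (fun t => f t * g t) x.
Proof. intros H1 H2; apply continuity_pt_filterlim; apply (continuity_pt_mult f g x); apply continuity_pt_filterlim; auto. Qed.
Lemma C_minus (f g : R -> R) x : continuous f x -> continuous g x -> continuous (fun t => f t - g t) x.
Proof. intros H1 H2; apply continuity_pt_filterlim; apply (continuity_pt_minus f g x); apply continuity_pt_filterlim; auto. Qed.
Lemma C_plus (f g : R -> R) x : continuous f x -> continuous g x -> continuous (fun t => f t + g t) x.
Proof. intros H1 H2; apply continuity_pt_filterlim; apply (continuity_pt_plus f g x); apply continuity_pt_filterlim; auto. Qed.
Lemma C_inv (f : R -> R) x : continuous f x -> f x <> 0 -> continuous (fun t => / f t) x.
Proof. intros H1 H2; apply continuity_pt_filterlim; apply (continuity_pt_inv f x); auto; apply continuity_pt_filterlim; auto. Qed.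
Lemma C_const (c x : R) : continuous (fun _ : R => c) x.
Proof. apply continuity_pt_filterlim. apply continuity_pt_const. intros u v; reflexivity. Qed.

Lemma u2_construct (v G Q : R -> R) (w0 : R) :
  (forall t, is_derive v t (- G t)) -> (forall t, is_derive G t (Q t * v t)) ->
  (forall t, continuous Q t) -> (forall t, v t ^ 2 + G t ^ 2 <> 0) ->
  exists u du A : R -> R,
    (forall t, is_derive u t (du t) /\ is_derive du t (- Q t * u t)) /\
    (forall t, u t = A t * v t + w0 / (v t ^ 2 + G t ^ 2) * G t) /\
    (forall t, du t = - A t * G t + w0 / (v t ^ 2 + G t ^ 2) * v t) /\ A 0 = 0.
Proof.
  intros Hv HG HQ HN.
  assert (Hcv : forall t, continuous v t) by (intros t; apply (der_cont v t _ (Hv t))).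
  assert (HcG : forall t, continuous G t) by (intros t; apply (der_cont G t _ (HG t))).
  set (N := fun t => v t ^ 2 + G t ^ 2).
  set (al := fun t => w0 * (1 - Q t) * (v t ^ 2 - G t ^ 2) * / (N t * N t)).
  assert (Hcal : forall t, continuous al t).
  { intros t. unfold al. apply C_mult. apply C_mult. apply C_mult. apply C_const.
    apply C_minus. apply C_const. apply HQ.
    apply C_minus; apply C_mult; try apply C_mult; try apply C_const; auto.
    apply C_inv. apply C_mult; unfold N; apply C_plus; apply C_mult; try apply C_mult;
      try apply C_const; auto.
    apply Rmult_integral_contrapositive; split; apply HN. }
  set (A := fun t => RInt al 0 t).
  assert (HA : forall t, is_derive A t (al t)).
  { intros t. apply (is_derive_RInt al A 0 t); [|apply Hcal].
    exists (mkposreal 1 Rlt_0_1). intros z _.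
    apply (@RInt_correct R_CompleteNormedModule).
    apply (@ex_RInt_continuous R_CompleteNormedModule). intros; apply Hcal. }
  assert (HNd : forall t, is_derive N t (2 * v t * (- G t) + 2 * G t * (Q t * v t))).
  { intros t. apply D_sq2; auto. }
  assert (Hb : forall t, is_derive (fun s => w0 * / N s) t
                 (w0 * (- (2 * v t * (- G t) + 2 * G t * (Q t * v t)) / N t ^ 2))).
  { intros t. apply is_derive_scal. apply is_derive_inv. apply HNd. apply HN. }
  exists (fun t => A t * v t + w0 / N t * G t), (fun t => - A t * G t + w0 / N t * v t), A.
  split; [|split; [intros; reflexivity|split; [intros; reflexivity|]]].
  - intros t. assert (Nt := HN t). fold (N t) in Nt. split.
    + eapply D_eq. apply D_plus. apply D_mult. apply HA. apply Hv.
      apply D_mult. apply Hb. apply HG.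
      cbv beta. unfold al, N in *. field. exact (HN t).
    + eapply D_eq. apply D_plus. apply D_mult. apply D_opp, HA. apply HG.
      apply D_mult. apply Hb. apply Hv.
      cbv beta. unfold al, N in *. field. exact (HN t).
  - unfold A. exact (@RInt_point R_CompleteNormedModule 0 al).
Qed.

Lemma mvt_K (g : R -> R) k1 k2 :
  (forall z, k1 <= z <= k2 -> is_derive g z (Derive g z)) ->
  forall y z, k1 <= y <= k2 -> k1 <= z <= k2 ->
  exists c, k1 <= c <= k2 /\ Rabs (c - z) <= Rabs (y - z) /\ g y - g z = Derive g c * (y - z).
Proof.
  intros Hg y z Hy Hz.
  destruct (MVT_gen g z y (Derive g)) as [c [Hc Heq]].
  - intros w Hw. apply Hg. assert (Rmin z y <= w <= Rmax z y) by lra.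
    unfold Rmin, Rmax in *; destruct (Rle_dec z y); lra.
  - intros w Hw. apply continuity_pt_filterlim. apply (der_cont g w (Derive g w)). apply Hg.
    unfold Rmin, Rmax in *; destruct (Rle_dec z y); lra.
  - exists c. unfold Rmin, Rmax in *; destruct (Rle_dec z y).
    + split; [lra|split; [|exact Heq]]. rewrite !Rabs_right; lra.
    + split; [lra|split; [|exact Heq]]. rewrite !Rabs_left1; lra.
Qed.

Lemma bound_K (g : R -> R) k1 k2 :
  (forall z, k1 <= z <= k2 -> continuous (Derive g) z) ->
  exists M, 0 < M /\ forall z, k1 <= z <= k2 -> Rabs (Derive g z) <= M.
Proof.
  intros Hc.
  destruct (@bounded_continuity R_AbsRing R_NormedModule (Derive g) k1 k2 Hc) as [M HM].
  exists (Rmax M 1). split. apply Rlt_le_trans with 1. lra. apply Rmax_r.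
  intros z Hz. apply Rle_trans with M. left. apply (HM z Hz). apply Rmax_l.
Qed.

Lemma lip_K (g : R -> R) k1 k2 M :
  (forall z, k1 <= z <= k2 -> is_derive g z (Derive g z)) ->
  (forall z, k1 <= z <= k2 -> Rabs (Derive g z) <= M) ->
  forall y z, k1 <= y <= k2 -> k1 <= z <= k2 -> Rabs (g y - g z) <= M * Rabs (y - z).
Proof.
  intros Hg HM y z Hy Hz.
  destruct (mvt_K g k1 k2 Hg y z Hy Hz) as [c [Hc [_ Heq]]].
  rewrite Heq, Rabs_mult. apply Rmult_le_compat_r. apply Rabs_pos. apply HM, Hc.
Qed.

Lemma rem_K (g : R -> R) k1 k2 :
  (forall z, k1 <= z <= k2 -> is_derive g z (Derive g z)) ->
  (forall z, k1 <= z <= k2 -> continuous (Derive g) z) ->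
  forall eps, 0 < eps -> exists eta, 0 < eta /\ forall y z, k1 <= y <= k2 -> k1 <= z <= k2 ->
    Rabs (y - z) < eta -> Rabs (g y - g z - Derive g z * (y - z)) <= eps * Rabs (y - z).
Proof.
  intros Hg Hc eps He.
  destruct (Heine_cor2 (f := Derive g) (a := k1) (b := k2)
     (fun x Hx => proj2 (continuity_pt_filterlim _ _) (Hc x Hx)) (mkposreal eps He)) as [eta Heta].
  exists eta. split. apply cond_pos.
  intros y z Hy Hz Hyz.
  destruct (mvt_K g k1 k2 Hg y z Hy Hz) as [c [Hc' [Hcz Heq]]].
  rewrite Heq. replace (Derive g c * (y - z) - Derive g z * (y - z)) with
    ((Derive g c - Derive g z) * (y - z)) by ring.
  rewrite Rabs_mult. apply Rmult_le_compat_r. apply Rabs_pos. left.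
  apply (Heta c z Hc' Hz). lra.
Qed.

Lemma prod_bound2 (a b e M : R) : 0 <= M -> Rabs e <= M * Rabs a -> 2 * b * e <= M * (a^2 + b^2).
Proof.
  intros HM He.
  assert (H1 : b * e <= Rabs b * Rabs e) by (rewrite <- Rabs_mult; apply Rle_abs).
  assert (H2 : 2 * Rabs a * Rabs b <= a^2 + b^2).
  { assert (Rabs a ^ 2 = a ^ 2) by apply pow2_abs.
    assert (Rabs b ^ 2 = b ^ 2) by apply pow2_abs.
    assert (0 <= (Rabs a - Rabs b)^2) by apply pow2_ge_0. nra. }
  assert (0 <= Rabs b) by apply Rabs_pos.
  assert (Rabs b * Rabs e <= Rabs b * (M * Rabs a)) by (apply Rmult_le_compat_l; auto).
  nra.
Qed.

Lemma dep_estimate (g : R -> R) k1 k2 (Xf Vf : R -> R -> R) x0 dl L (u du : R -> R) :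
  (forall z, k1 <= z <= k2 -> is_derive g z (Derive g z)) ->
  (forall z, k1 <= z <= k2 -> continuous (Derive g) z) ->
  0 < dl -> 0 <= L ->
  (forall x, Rabs (x - x0) <= dl -> forall t,
      is_derive (fun s => Xf s x) t (Vf x t) /\ is_derive (Vf x) t (- g (Xf t x))) ->
  (forall x, Rabs (x - x0) <= dl -> Xf 0 x = x /\ Vf x 0 = 0) ->
  (forall x, Rabs (x - x0) <= dl -> forall t, 0 <= t -> k1 <= Xf t x <= k2) ->
  (forall t, is_derive u t (du t) /\ is_derive du t (- Derive g (Xf t x0) * u t)) ->
  u 0 = 1 -> du 0 = 0 ->
  forall eps, 0 < eps -> exists rho, 0 < rho /\ forall x, Rabs (x - x0) < rho ->
    forall t, 0 <= t <= L -> Rabs (Vf x t - Vf x0 t - (x - x0) * du t) <= eps * Rabs (x - x0).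
Proof.
  intros Hg Hcg Hdl HL HXd HX0 HK Hu Hu0 Hdu0 eps Heps.
  destruct (bound_K g k1 k2 Hcg) as [M [HM HMb]].
  assert (Hlip := lip_K g k1 k2 M Hg HMb).
  assert (Hx0 : Rabs (x0 - x0) <= dl) by (rewrite Rminus_diag, Rabs_R0; lra).
  set (E1 := exp ((1 + M) * L)).
  assert (HE1 : 0 < E1) by apply exp_pos.
  assert (D1 : forall x, Rabs (x - x0) <= dl -> forall t, 0 <= t <= L ->
             (Xf t x - Xf t x0) ^ 2 <= E1 * (x - x0) ^ 2).
  { intros x Hx t Ht.
    assert (H := gronwall (fun s => (Xf s x - Xf s x0) ^ 2 + (Vf x s - Vf x0 s) ^ 2)
      (fun s => 2 * (Xf s x - Xf s x0) * (Vf x s - Vf x0 s) +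
                2 * (Vf x s - Vf x0 s) * (- g (Xf s x) - - g (Xf s x0))) (1 + M) 0 L).
    cbv beta in H. destruct (HX0 x Hx) as [A1 A2]. destruct (HX0 x0 Hx0) as [B1 B2].
    rewrite A1, A2, B1, B2 in H.
    assert (Hle : (Xf t x - Xf t x0) ^ 2 + (Vf x t - Vf x0 t) ^ 2 <=
                  ((x - x0) ^ 2 + (0 - 0) ^ 2 + 0 / (1 + M)) * exp ((1 + M) * t)).
    { apply H; try lra.
      - intros s _. apply (D_sq2 (fun s => Xf s x - Xf s x0) (fun s => Vf x s - Vf x0 s)); apply D_minus.
        apply (proj1 (HXd x Hx s)). apply (proj1 (HXd x0 Hx0 s)).
        apply (proj2 (HXd x Hx s)). apply (proj2 (HXd x0 Hx0 s)).
      - intros s Hs.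
        assert (Hk := HK x Hx s (proj1 Hs)). assert (Hk0 := HK x0 Hx0 s (proj1 Hs)).
        assert (Hl := Hlip _ _ Hk0 Hk).
        assert (2 * (Vf x s - Vf x0 s) * (g (Xf s x0) - g (Xf s x)) <=
                  M * ((Xf s x - Xf s x0)^2 + (Vf x s - Vf x0 s)^2)).
        { apply prod_bound2. lra. eapply Rle_trans. exact Hl. right. f_equal. apply Rabs_minus_sym. }
        assert (0 <= ((Xf s x - Xf s x0) - (Vf x s - Vf x0 s))^2) by apply pow2_ge_0.
        lra. }
    assert (exp ((1 + M) * t) <= E1).
    { unfold E1. destruct (Req_dec t L) as [->|ne]. lra. left. apply exp_increasing. nra. }
    assert (0 <= (Vf x t - Vf x0 t) ^ 2) by apply pow2_ge_0.
    assert (0 <= (x - x0) ^ 2) by apply pow2_ge_0.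
    replace ((x - x0) ^ 2 + (0 - 0) ^ 2 + 0 / (1 + M)) with ((x - x0) ^ 2) in Hle by (field; lra).
    nra. }
  set (E2 := exp ((2 + M) * L)).
  assert (HE2 : 0 < E2) by apply exp_pos.
  set (B := E1 * E2 / (2 + M)).
  assert (HB : 0 < B) by (unfold B; apply Rdiv_lt_0_compat; [apply Rmult_lt_0_compat|]; lra).
  set (e1 := eps / (1 + B)).
  assert (He1 : 0 < e1) by (unfold e1; apply Rdiv_lt_0_compat; lra).
  destruct (rem_K g k1 k2 Hg Hcg e1 He1) as [eta [Heta Hrem]].
  exists (Rmin dl (eta / (1 + E1))). split.
  { apply Rmin_pos. lra. apply Rdiv_lt_0_compat; lra. }
  intros x Hx t Ht.
  assert (Hr1 : Rmin dl (eta / (1 + E1)) <= dl) by apply Rmin_l.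
  assert (Hr2 : Rmin dl (eta / (1 + E1)) <= eta / (1 + E1)) by apply Rmin_r.
  assert (Hxd : Rabs (x - x0) <= dl) by lra.
  assert (Hw : forall s, 0 <= s <= L -> Rabs (Xf s x - Xf s x0) < eta).
  { intros s Hs. apply (Rle_lt_trans _ (sqrt (E1 * (x - x0)^2))).
    - rewrite <- sqrt_Rsqr_abs. apply sqrt_le_1_alt. unfold Rsqr. 
      assert (H := D1 x Hxd s Hs). simpl in H |- *. lra.
    - rewrite sqrt_mult by (try lra; apply pow2_ge_0).
      rewrite <- (sqrt_Rsqr eta) by lra.
      assert (Hs1 : sqrt ((x - x0) ^ 2) = Rabs (x - x0)) by (rewrite <- sqrt_Rsqr_abs; unfold Rsqr; f_equal; ring).
      rewrite Hs1.
      assert (HsE : sqrt E1 < 1 + E1).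
      { apply (Rsqr_incrst_0 _ _); try (apply sqrt_pos); try lra.
        rewrite Rsqr_sqrt by lra. unfold Rsqr. nra. }
      assert (0 <= sqrt E1) by apply sqrt_pos.
      assert (0 <= Rabs (x - x0)) by apply Rabs_pos.
      assert (Rabs (x - x0) < eta / (1 + E1)) by lra.
      assert (Rabs (x - x0) * (1 + E1) < eta).
      { apply (Rmult_lt_compat_r (1 + E1)) in H1; [|lra].
        unfold Rdiv in H1. rewrite Rmult_assoc, Rinv_l, Rmult_1_r in H1 by lra. exact H1. }
      unfold Rsqr. rewrite sqrt_square by lra. nra. }
  set (Q := fun s => Derive g (Xf s x0)).
  set (z := fun s => (Xf s x - Xf s x0) - (x - x0) * u s).
  set (z' := fun s => (Vf x s - Vf x0 s) - (x - x0) * du s).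
  set (Kc := e1 ^ 2 * E1 * (x - x0) ^ 2).
  assert (HKc : 0 <= Kc).
  { unfold Kc. assert (0 <= e1^2) by apply pow2_ge_0. assert (0 <= (x-x0)^2) by apply pow2_ge_0.
    apply Rmult_le_pos; [apply Rmult_le_pos|]; lra. }
  assert (H := gronwall (fun s => z s ^ 2 + z' s ^ 2)
      (fun s => 2 * z s * z' s + 2 * z' s * ((- g (Xf s x) - - g (Xf s x0)) -
           (x - x0) * (- Q s * u s))) (2 + M) Kc L).
  destruct (HX0 x Hxd) as [A1 A2]. destruct (HX0 x0 Hx0) as [B1 B2].
  assert (Hz0 : z 0 = 0) by (unfold z; rewrite A1, B1, Hu0; ring).
  assert (Hz'0 : z' 0 = 0) by (unfold z'; rewrite A2, B2, Hdu0; ring).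
  assert (Hle : z t ^ 2 + z' t ^ 2 <= (z 0 ^ 2 + z' 0 ^ 2 + Kc / (2 + M)) * exp ((2 + M) * t)).
  { apply H; try lra; cbv beta.
    - intros s _. apply (D_sq2 z z'); unfold z, z'; apply D_minus.
      + apply D_minus. apply (proj1 (HXd x Hxd s)). apply (proj1 (HXd x0 Hx0 s)).
      + apply is_derive_scal, Hu.
      + apply D_minus. apply (proj2 (HXd x Hxd s)). apply (proj2 (HXd x0 Hx0 s)).
      + apply is_derive_scal, Hu.
    - intros s Hs.
      assert (Hk := HK x Hxd s (proj1 Hs)). assert (Hk0 := HK x0 Hx0 s (proj1 Hs)).
      set (R0 := g (Xf s x) - g (Xf s x0) - Q s * (Xf s x - Xf s x0)).
      assert (HR : Rabs R0 <= e1 * Rabs (Xf s x - Xf s x0)).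
      { apply Hrem; auto. }
      assert (HR2 : R0 ^ 2 <= Kc).
      { unfold Kc. assert (H1 := D1 x Hxd s Hs).
        assert (Rabs R0 ^ 2 = R0 ^ 2) by apply pow2_abs.
        assert (Rabs (Xf s x - Xf s x0) ^ 2 = (Xf s x - Xf s x0) ^ 2) by apply pow2_abs.
        assert (0 <= Rabs R0) by apply Rabs_pos.
        assert (Rabs R0 ^ 2 <= (e1 * Rabs (Xf s x - Xf s x0)) ^ 2).
        { apply pow_incr. split; auto. }
        assert (0 <= e1 ^ 2) by apply pow2_ge_0.
        assert ((e1 * Rabs (Xf s x - Xf s x0)) ^ 2 = e1 ^ 2 * (Xf s x - Xf s x0) ^ 2).
        { rewrite Rpow_mult_distr. congruence. }
        assert (e1 ^ 2 * (Xf s x - Xf s x0) ^ 2 <= e1 ^ 2 * (E1 * (x - x0) ^ 2)).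
        { apply Rmult_le_compat_l; auto. }
        lra. }
      assert (Hid : 2 * z s * z' s + 2 * z' s * ((- g (Xf s x) - - g (Xf s x0)) -
           (x - x0) * (- Q s * u s)) = 2 * z s * z' s + 2 * (- Q s) * z s * z' s
             + 2 * z' s * (- R0)).
      { unfold z, z', R0. ring. }
      rewrite Hid.
      assert (2 * (- Q s) * z s * z' s <= M * (z s ^ 2 + z' s ^ 2)).
      { apply prod_bound. rewrite Rabs_Ropp. apply HMb. exact Hk0. }
      assert (0 <= (z s - z' s) ^ 2) by apply pow2_ge_0.
      assert (0 <= (z' s + R0) ^ 2) by apply pow2_ge_0.
      assert (0 <= z s ^ 2) by apply pow2_ge_0.
      lra. }
  rewrite Hz0, Hz'0 in Hle.
  assert (Hexp : exp ((2 + M) * t) <= E2).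
  { unfold E2. destruct (Req_dec t L) as [->|ne]. lra. left. apply exp_increasing. nra. }
  assert (Hz2 : z' t ^ 2 <= eps ^ 2 * (x - x0) ^ 2).
  { assert (0 <= z t ^ 2) by apply pow2_ge_0.
    assert (0 <= Kc / (2 + M)) by (apply Rdiv_le_0_compat; lra).
    assert (Hm : (0 ^ 2 + 0 ^ 2 + Kc / (2 + M)) * exp ((2 + M) * t) <= Kc / (2 + M) * E2).
    { replace (0 ^ 2 + 0 ^ 2 + Kc / (2 + M)) with (Kc / (2 + M)) by ring.
      apply Rmult_le_compat_l; auto. }
    assert (HKB : Kc / (2 + M) * E2 = e1 ^ 2 * B * (x - x0) ^ 2).
    { unfold Kc, B. field. lra. }
    assert (He1B : e1 ^ 2 * B <= eps ^ 2).
    { unfold e1. replace ((eps / (1 + B)) ^ 2 * B) with (eps ^ 2 * (B / (1 + B) ^ 2)) by (field; lra).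
      assert (B / (1 + B) ^ 2 <= 1).
      { apply (Rmult_le_reg_r ((1 + B) ^ 2)). nra. unfold Rdiv. rewrite Rmult_assoc, Rinv_l by nra. nra. }
      assert (0 <= eps ^ 2) by apply pow2_ge_0.
      assert (0 <= B / (1 + B) ^ 2) by (apply Rdiv_le_0_compat; nra). nra. }
    assert (0 <= (x - x0) ^ 2) by apply pow2_ge_0.
    assert (e1 ^ 2 * B * (x - x0) ^ 2 <= eps ^ 2 * (x - x0) ^ 2) by (apply Rmult_le_compat_r; auto).
    lra. }
  apply sq_abs_le. apply Rmult_le_pos. lra. apply Rabs_pos.
  unfold z' in Hz2. rewrite Rpow_mult_distr, pow2_abs. exact Hz2.
Qed.

Lemma ivp_facts (g : R -> R) (y : R) (f : R -> R) : solves_ivp g y f ->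
  (forall t, is_derive f t (Derive f t) /\ is_derive (Derive f) t (- g (f t))) /\
  f 0 = y /\ Derive f 0 = 0.
Proof.
  intros [df [Hd [H0 Hd0]]].
  assert (E : forall t, Derive f t = df t) by (intros t; apply is_derive_unique, Hd).
  split; [|split; [exact H0|rewrite E; exact Hd0]].
  intros t. rewrite E. split. apply Hd.
  eapply D_ext; [|apply (proj2 (Hd t))]. intros s; symmetry; apply E.
Qed.

Lemma get_h (g : R -> R) a b :
  (forall x, in_interval a b x ->
          exists! y, in_interval a b y /\ potential g y = potential g x /\
                     sgn y = - sgn x) ->
  forall x, in_interval a b x -> 0 < x ->
  exists hx, in_interval a b hx /\ hx < 0 /\ potential g hx = potential g x.
Proof.
  intros Hh x Hx Hx0. destruct (Hh x Hx) as [y [[Hy [HV Hs]] _]].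
  exists y. split; [exact Hy|split; [|exact HV]].
  unfold sgn in Hs. destruct (Rlt_dec 0 x); [|lra].
  destruct (Rlt_dec 0 y); [lra|]. destruct (Rlt_dec y 0); [auto|lra].
Qed.

Lemma shift_deriv (f : R -> R) (t1 s l : R) : is_derive f (t1 + s) l ->
  is_derive (fun s => f (t1 + s)) s l.
Proof.
  intros H.
  assert (Hd : is_derive (fun s => t1 + s) s 1).
  { eapply D_eq; [apply D_plus; [apply D_const|apply D_id]|ring]. }
  eapply D_eq. apply (D_comp f (fun s => t1 + s) s l 1 H Hd). ring.
Qed.

Lemma lin_growth (y v : R -> R) (T k : R) :
  (forall t, y (t + T) = y t + k * v t) -> periodic v T ->
  forall n t, y (t + INR n * T) = y t + INR n * k * v t.
Proof.
  intros Hy Hv n; induction n as [|n IH]; intros t.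
  - simpl. replace (t + 0 * T) with t by ring. ring.
  - rewrite S_INR. replace (t + (INR n + 1) * T) with ((t + INR n * T) + T) by ring.
    rewrite Hy, IH, (periodic_nat v T Hv). ring.
Qed.

Lemma range_all (g : R -> R) a b (f : R -> R) Tp x hx :
  Rbar_lt a 0 -> Rbar_lt 0 b ->
  (forall z, in_interval a b z -> continuous g z) ->
  (forall x y, in_interval a b x -> in_interval a b y ->
            0 < x -> x < y -> potential g x < potential g y) ->
  (forall x y, in_interval a b x -> in_interval a b y ->
            x < y -> y < 0 -> potential g y < potential g x) ->
  in_interval a b x -> 0 < x -> in_interval a b hx -> hx < 0 ->
  potential g hx = potential g x ->
  solves_ivp g x f -> is_min_period f Tp ->
  forall t, (hx <= f t <= x) /\
     Derive f t ^ 2 / 2 + potential g (f t) = potential g x.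
Proof.
  intros Ha Hb Hgc Hinc Hdec Hx Hx0 Hhx Hhx0 HV Hivp [HT [Hp _]] t.
  destruct (ivp_facts g x f Hivp) as [Hd [H0 Hd0]].
  assert (Hpd : periodic (Derive f) Tp).
  { intros s. apply periodic_derive; auto. intros r; exists (Derive f r); apply Hd. }
  destruct (INR_archimed Tp (- t) HT) as [n Hn].
  rewrite <- (periodic_nat f Tp Hp n t), <- (periodic_nat (Derive f) Tp Hpd n t).
  apply (energy_stay g a b f (Derive f) x hx); auto. lra.
Qed.

Lemma sq0 (x : R) : x ^ 2 = 0 -> x = 0.
Proof. intros H. destruct (Req_dec x 0) as [e|n]; auto. exfalso; apply (pow_nonzero x 2 n H). Qed.

Lemma shift_deriv_r (f : R -> R) (s T0 l : R) : is_derive f (s + T0) l ->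
  is_derive (fun t => f (t + T0)) s l.
Proof.
  intros H. rewrite Rplus_comm in H. apply shift_deriv in H.
  eapply D_ext; [|exact H]. intros t; cbv beta; f_equal; ring.
Qed.

Lemma small_zero (r : R) : (forall eps, 0 < eps -> Rabs r <= 3 * eps) -> r = 0.
Proof.
  intros H. destruct (Req_dec r 0) as [e|n]; auto. exfalso.
  assert (Hp : 0 < Rabs r) by (apply Rabs_pos_lt; exact n).
  specialize (H (Rabs r / 4)). assert (Rabs r <= 3 * (Rabs r / 4)) by (apply H; lra). lra.
Qed.

Lemma Rabs_def2b (x y : R) : Rabs x <= y -> - y <= x <= y.
Proof. unfold Rabs; destruct (Rcase_abs x); intros; lra. Qed.

Theorem proposition3p2
  (g : R -> R) (a b : Rbar)
  (Ha0 : Rbar_lt a 0) (H0b : Rbar_lt 0 b)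
  (Hg_C1 : forall x, in_interval a b x ->
             ex_derive g x /\ continuous (Derive g) x)
  (Hg0 : g 0 = 0) (Hdg0 : Derive g 0 > 0)
  (Hinc : forall x y, in_interval a b x -> in_interval a b y ->
            0 < x -> x < y -> potential g x < potential g y)
  (Hdec : forall x y, in_interval a b x -> in_interval a b y ->
            x < y -> y < 0 -> potential g y < potential g x)
  (Hh : forall x, in_interval a b x ->
          exists! y, in_interval a b y /\ potential g y = potential g x /\
                     sgn y = - sgn x)
  (X : R -> R -> R)
  (HX : forall y, in_interval a b y -> 0 < y -> solves_ivp g y (fun t => X t y))
  (T : R -> R)
  (HT : forall y, in_interval a b y -> 0 < y -> is_min_period (fun t => X t y) (T y))
  (x0 : R) (Hx0J : in_interval a b x0) (Hx0 : 0 < x0)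
  (HTder : ex_derive T x0) :
  let q := fun t => Derive g (X t x0) in
  let Xdot := fun t => Derive (fun s => X s x0) t in
  ((forall y, lin_sol q y -> periodic y (T x0)) \/
   (forall y, lin_sol q y ->
      (unbounded y <-> ~ (exists c, forall t, y t = c * Xdot t)))) /\
  ((forall y, lin_sol q y -> periodic y (T x0)) <-> Derive T x0 = 0).
Proof.
  intros q Xdot.
  assert (Hgd : forall z, in_interval a b z -> is_derive g z (Derive g z))
    by (intros z Hz; apply Derive_correct, Hg_C1, Hz).
  assert (Hgc : forall z, in_interval a b z -> continuous g z)
    by (intros z Hz; apply (der_cont g z _ (Hgd z Hz))).
  assert (Hcg' : forall z, in_interval a b z -> continuous (Derive g) z)
    by (intros z Hz; apply Hg_C1, Hz).
  destruct (ivp_facts g x0 _ (HX x0 Hx0J Hx0)) as [Hd0 [HX00 HXd00]].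
  fold Xdot in Hd0, HXd00.
  assert (HXd : forall t, is_derive (fun s => X s x0) t (Xdot t)) by (intros t; apply Hd0).
  assert (HXdd : forall t, is_derive Xdot t (- g (X t x0))) by (intros t; apply Hd0).
  destruct (get_h g a b Hh x0 Hx0J Hx0) as [hx0 [Hhx0J [Hhx0 HVh0]]].
  assert (HTx0 := HT x0 Hx0J Hx0). destruct HTx0 as [HT0 [HpX HTmin]].
  set (T0 := T x0) in *.
  assert (Hrange0 := range_all g a b (fun t => X t x0) T0 x0 hx0 Ha0 H0b Hgc Hinc Hdec
     Hx0J Hx0 Hhx0J Hhx0 HVh0 (HX x0 Hx0J Hx0) (conj HT0 (conj HpX HTmin))).
  cbv beta in Hrange0. fold Xdot in Hrange0.
  assert (HK0 : forall z, hx0 <= z <= x0 -> in_interval a b z)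
    by (intros z Hz; apply (ii_conv a b hx0 x0); auto).
  assert (HXJ : forall t, in_interval a b (X t x0)) by (intros t; apply HK0, (proj1 (Hrange0 t))).
  assert (HpXd : periodic Xdot T0).
  { intros s. apply (periodic_derive (fun s => X s x0)); auto. intros r; exists (Xdot r); apply HXd. }
  set (G := fun t => g (X t x0)).
  assert (HG : forall t, is_derive G t (q t * Xdot t)).
  { intros t. eapply D_eq. apply (D_comp g (fun s => X s x0)). apply Hgd, HXJ. apply HXd.
    unfold q; ring. }
  assert (Hqc : forall t, continuous q t).
  { intros t. unfold q. apply (continuous_comp (fun s => X s x0) (Derive g)).
    apply (der_cont _ _ _ (HXd t)). apply Hcg', HXJ. }
  destruct (bound_K g hx0 x0 (fun z Hz => Hcg' z (HK0 z Hz))) as [Mq [HMq HMqb]].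
  assert (Hqb : forall t, Rabs (q t) <= Mq) by (intros t; apply HMqb, (proj1 (Hrange0 t))).
  assert (Hqp : periodic q T0) by (intros t; unfold q; rewrite HpX; reflexivity).
  assert (Hlip0 := lip_K g hx0 x0 Mq (fun z Hz => Hgd z (HK0 z Hz)) HMqb).
  assert (HN : forall t, Xdot t ^ 2 + G t ^ 2 <> 0).
  { intros t1 Hz.
    assert (Hv1 : Xdot t1 = 0) by (assert (0 <= Xdot t1 ^ 2) by apply pow2_ge_0;
       assert (0 <= G t1 ^ 2) by apply pow2_ge_0; apply sq0; lra).
    assert (HG1 : G t1 = 0) by (assert (0 <= Xdot t1 ^ 2) by apply pow2_ge_0;
       assert (0 <= G t1 ^ 2) by apply pow2_ge_0; apply sq0; lra).
    set (p := X t1 x0).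
    assert (Hstay : forall s, 0 <= s -> X (t1 + s) x0 = p).
    { intros s Hs.
      assert (Hgr := gronwall (fun s => (X (t1 + s) x0 - p) ^ 2 + Xdot (t1 + s) ^ 2)
        (fun s => 2 * (X (t1 + s) x0 - p) * Xdot (t1 + s) + 2 * Xdot (t1 + s) * (- g (X (t1 + s) x0)))
        (1 + Mq) 0 s).
      assert (Hle : (X (t1 + s) x0 - p) ^ 2 + Xdot (t1 + s) ^ 2 <=
                    ((X (t1 + 0) x0 - p) ^ 2 + Xdot (t1 + 0) ^ 2 + 0 / (1 + Mq)) * exp ((1 + Mq) * s)).
      { apply Hgr; try lra.
        - intros r _. apply (D_sq2 (fun s => X (t1 + s) x0 - p) (fun s => Xdot (t1 + s))).
          eapply D_eq. apply D_minus. apply (shift_deriv (fun s => X s x0)), HXd. apply D_const. ring.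
          apply (shift_deriv Xdot), HXdd.
        - intros r Hr.
          assert (Hl := Hlip0 p (X (t1 + r) x0) (proj1 (Hrange0 t1)) (proj1 (Hrange0 (t1 + r)))).
          assert (Hgp : g p = 0) by exact HG1.
          assert (2 * Xdot (t1 + r) * (g p - g (X (t1 + r) x0)) <=
                    Mq * ((X (t1 + r) x0 - p) ^ 2 + Xdot (t1 + r) ^ 2)).
          { apply prod_bound2. lra. eapply Rle_trans. exact Hl. right. f_equal. apply Rabs_minus_sym. }
          assert (0 <= ((X (t1 + r) x0 - p) - Xdot (t1 + r)) ^ 2) by apply pow2_ge_0.
          rewrite Hgp in H. lra. }
      rewrite Rplus_0_r in Hle. fold p in Hle. rewrite Hv1 in Hle.
      replace ((p - p) ^ 2 + 0 ^ 2 + 0 / (1 + Mq)) with 0 in Hle by (field; lra).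
      assert (0 <= Xdot (t1 + s) ^ 2) by apply pow2_ge_0.
      assert (0 <= (X (t1 + s) x0 - p) ^ 2) by apply pow2_ge_0.
      assert (Hz2 : (X (t1 + s) x0 - p) ^ 2 = 0) by lra.
      apply sq0 in Hz2. lra. }
    assert (Hconst : forall t, X t x0 = p).
    { intros t. destruct (INR_archimed T0 (t1 - t) HT0) as [n Hn].
      rewrite <- (periodic_nat (fun t => X t x0) T0 HpX n t). cbv beta.
      replace (t + INR n * T0) with (t1 + (t + INR n * T0 - t1)) by ring.
      apply Hstay. lra. }
    assert (T0 <= T0 / 2); [|lra].
    apply HTmin. lra. intros t. cbv beta. rewrite !Hconst. reflexivity. }
  assert (Hgx0 : g x0 <> 0).
  { intros E. apply (HN 0). replace (Xdot 0) with 0 by (symmetry; exact HXd00). unfold G. rewrite HX00, E. ring. }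
  assert (HXd0' : Xdot 0 = 0) by exact HXd00.
  assert (HXT0 : X T0 x0 = x0) by (rewrite <- HX00 at 2; replace T0 with (0 + T0) by ring; apply HpX).
  assert (HXdT0 : Xdot T0 = 0) by (rewrite <- HXd0'; replace T0 with (0 + T0) by ring; apply HpXd).
  destruct (u2_construct Xdot G q (g x0) HXdd HG Hqc HN) as [u [du [A [Hu [HuE [HduE HA0]]]]]].
  assert (Hu0 : u 0 = 1).
  { rewrite HuE, HA0, HXd0'. unfold G. rewrite HX00. field. intros E.
    apply Hgx0. apply sq0. lra. }
  assert (Hdu0 : du 0 = 0).
  { rewrite HduE, HA0, HXd0'. ring. }
  set (c := A T0).
  assert (HuT0 : u T0 = 1).
  { rewrite HuE, HXdT0. unfold G. rewrite HXT0. field. intros E.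
    apply Hgx0. apply sq0. lra. }
  assert (HduT0 : du T0 = - c * g x0).
  { rewrite HduE, HXdT0. unfold G. rewrite HXT0. unfold c. ring. }
  assert (Hrepr : forall y dy, (forall t, is_derive y t (dy t) /\ is_derive dy t (- q t * y t)) ->
             forall t, y t = y 0 * u t + (dy 0 / - g x0) * Xdot t).
  { intros y dy Hy t.
    assert (Hz := lin_unique q (fun t => y t - y 0 * u t - (dy 0 / - g x0) * Xdot t)
                     (fun t => dy t - y 0 * du t - (dy 0 / - g x0) * (- G t)) Mq).
    assert (H := Hz (Rlt_le _ _ HMq) Hqb); clear Hz.
    assert (H0 : (fun t => y t - y 0 * u t - (dy 0 / - g x0) * Xdot t) t = 0).
    { apply H; cbv beta.
      - intros s. split.
        + apply D_minus. apply D_minus. apply Hy. apply is_derive_scal, Hu.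
          apply is_derive_scal, HXdd.
        + eapply D_eq. apply D_minus. apply D_minus. apply Hy. apply is_derive_scal, Hu.
          apply is_derive_scal. apply D_opp, HG.
          assert (Hdu := proj2 (Hu s)). ring.
      - rewrite Hu0, HXd0'. ring.
      - rewrite Hdu0. unfold G. rewrite HX00. field. exact Hgx0. }
    cbv beta in H0. lra. }
  assert (Hshift : forall t, u (t + T0) = u t + c * Xdot t).
  { intros t.
    assert (Hz := lin_unique q (fun t => u (t + T0) - u t - c * Xdot t)
                     (fun t => du (t + T0) - du t - c * (- G t)) Mq).
    assert (H := Hz (Rlt_le _ _ HMq) Hqb); clear Hz.
    assert (H0 : (fun t => u (t + T0) - u t - c * Xdot t) t = 0).
    { apply H; cbv beta.
      - intros s. split.
        + apply D_minus. apply D_minus. apply shift_deriv_r, Hu. apply Hu.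
          apply is_derive_scal, HXdd.
        + eapply D_eq. apply D_minus. apply D_minus. apply shift_deriv_r, Hu. apply Hu.
          apply is_derive_scal. apply D_opp, HG.
          rewrite Hqp. ring.
      - replace (0 + T0) with T0 by ring. rewrite HuT0, Hu0, HXd0'. ring.
      - replace (0 + T0) with T0 by ring. rewrite HduT0, Hdu0. unfold G. rewrite HX00. ring. }
    cbv beta in H0. lra. }
  destruct (ii_open a b x0 Hx0J) as [e [He HeJ]].
  set (dl := Rmin (e / 2) (x0 / 2)).
  assert (Hdl1 : dl <= e / 2) by apply Rmin_l. assert (Hdl2 : dl <= x0 / 2) by apply Rmin_r.
  assert (Hdl : 0 < dl) by (apply Rmin_pos; lra).
  assert (HxJ : forall x, Rabs (x - x0) <= dl -> in_interval a b x /\ 0 < x).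
  { intros x Hx. split. apply HeJ. lra. apply Rabs_def2b in Hx. lra. }
  set (xm := x0 + dl).
  assert (Hxm : Rabs (xm - x0) <= dl) by (unfold xm; rewrite Rabs_right; lra).
  destruct (HxJ xm Hxm) as [HxmJ Hxm0].
  destruct (get_h g a b Hh xm HxmJ Hxm0) as [hm [HhmJ [Hhm HVhm]]].
  assert (HKx : forall x, Rabs (x - x0) <= dl -> forall t, 0 <= t -> hm <= X t x <= xm).
  { intros x Hx t _. destruct (HxJ x Hx) as [HxJ' Hxp].
    destruct (get_h g a b Hh x HxJ' Hxp) as [hx [HhxJ [Hhx HVhx]]].
    destruct (HT x HxJ' Hxp) as [HTx1 [HTx2 HTx3]].
    assert (Hr := proj1 (range_all g a b (fun t => X t x) (T x) x hx Ha0 H0b Hgc Hinc Hdec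
         HxJ' Hxp HhxJ Hhx HVhx (HX x HxJ' Hxp) (conj HTx1 (conj HTx2 HTx3)) t)).
    cbv beta in Hr.
    assert (x <= xm) by (unfold xm; apply Rabs_def2b in Hx; lra).
    assert (hm <= hx).
    { destruct (Rle_lt_dec hm hx) as [l|l]; auto. exfalso.
      assert (potential g hm < potential g hx) by (apply Hdec; auto).
      destruct (Req_dec x xm) as [E|E].
      - rewrite E in HVhx. lra.
      - assert (potential g x < potential g xm) by (apply Hinc; auto; lra). lra. }
    lra. }
  assert (HKJ : forall z, hm <= z <= xm -> in_interval a b z)
    by (intros z Hz; apply (ii_conv a b hm xm); auto).
  set (Vf := fun y t => Derive (fun s => X s y) t).
  assert (Hdep := dep_estimate g hm xm X Vf x0 dl (T0 + 1) u du
     (fun z Hz => Hgd z (HKJ z Hz)) (fun z Hz => Hcg' z (HKJ z Hz)) Hdl ltac:(lra)).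
  assert (Hdep2 : forall eps, 0 < eps -> exists rho, 0 < rho /\ forall x, Rabs (x - x0) < rho ->
    forall t, 0 <= t <= T0 + 1 -> Rabs (Vf x t - Vf x0 t - (x - x0) * du t) <= eps * Rabs (x - x0)).
  { apply Hdep.
    - intros x Hx t. destruct (HxJ x Hx) as [HxJ' Hxp].
      apply (ivp_facts g x _ (HX x HxJ' Hxp)).
    - intros x Hx. destruct (HxJ x Hx) as [HxJ' Hxp].
      apply (ivp_facts g x _ (HX x HxJ' Hxp)).
    - exact HKx.
    - exact Hu.
    - exact Hu0.
    - exact Hdu0. }
  clear Hdep.
  assert (HTd : is_derive T x0 (Derive T x0)) by (apply Derive_correct, HTder).
  assert (GT0 : G T0 = g x0) by (unfold G; rewrite HXT0; reflexivity).
  assert (Hcomp : is_derive (fun x => Xdot (T x)) x0 (Derive T x0 * - G T0)).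
  { apply (D_comp Xdot T). apply HXdd. exact HTd. }
  rewrite GT0 in Hcomp.
  apply is_derive_Reals in Hcomp.
  assert (Hdu_d : is_derive (fun x => du (T x)) x0 (Derive T x0 * (- q T0 * u T0))).
  { apply (D_comp du T). apply (proj2 (Hu T0)). exact HTd. }
  assert (Hcdu := der_cont _ _ _ Hdu_d).
  assert (HcT := der_cont _ _ _ HTd).
  assert (Hkey : du T0 - Derive T x0 * g x0 = 0).
  { apply small_zero. intros eps Heps.
    destruct (Hdep2 eps Heps) as [r1 [Hr1 Hr1b]].
    destruct (Hcomp eps Heps) as [d2 Hd2].
    destruct (cont_eps _ _ Hcdu eps Heps) as [d3 [Hd3 Hd3b]].
    destruct (cont_eps _ _ HcT 1 Rlt_0_1) as [d4 [Hd4 Hd4b]].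
    assert (Hd2p := cond_pos d2).
    set (m := Rmin (Rmin r1 d2) (Rmin (Rmin d3 d4) dl)).
    assert (Hm1 : m <= r1) by (unfold m; eapply Rle_trans; apply Rmin_l).
    assert (Hm2 : m <= d2) by (unfold m; eapply Rle_trans; [apply Rmin_l|apply Rmin_r]).
    assert (Hm3 : m <= d3) by (unfold m; eapply Rle_trans; [apply Rmin_r|];
       eapply Rle_trans; apply Rmin_l).
    assert (Hm4 : m <= d4) by (unfold m; eapply Rle_trans; [apply Rmin_r|];
       eapply Rle_trans; [apply Rmin_l|apply Rmin_r]).
    assert (Hm5 : m <= dl) by (unfold m; eapply Rle_trans; [apply Rmin_r|apply Rmin_r]).
    assert (Hm0 : 0 < m) by (unfold m; repeat apply Rmin_pos; lra).
    set (hh := m / 2).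
    assert (Hhh : 0 < hh) by (unfold hh; lra).
    assert (Hhmd : hh = m / 2) by reflexivity.
    set (x := x0 + hh).
    assert (Hxa : Rabs (x - x0) = hh) by (unfold x; replace (x0 + hh - x0) with hh by ring;
       apply Rabs_right; lra).
    destruct (HxJ x ltac:(lra)) as [HxJ' Hxp].
    destruct (HT x HxJ' Hxp) as [HTx1 [HTx2 HTx3]].
    destruct (ivp_facts g x _ (HX x HxJ' Hxp)) as [Hdx [_ Hdx0]].
    assert (HVx : Vf x (T x) = 0).
    { unfold Vf. rewrite <- Hdx0. replace (T x) with (0 + T x) by ring.
      apply (periodic_derive (fun s => X s x)); auto. intros r; exists (Derive (fun s => X s x) r); apply Hdx. }
    assert (HTxc : Rabs (T x - T0) < 1) by (apply Hd4b; lra).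
    assert (HTxr : 0 <= T x <= T0 + 1) by (apply Rabs_def2 in HTxc; lra).
    assert (E1 := Hr1b x ltac:(lra) (T x) HTxr).
    rewrite HVx, Hxa in E1. change (Vf x0 (T x)) with (Xdot (T x)) in E1.
    assert (E2 := Hd2 hh ltac:(lra) ltac:(rewrite Rabs_right; lra)).
    fold x in E2. fold T0 in E2. rewrite HXdT0 in E2.
    assert (E3 := Hd3b x ltac:(lra)). fold T0 in E3.
    assert (E2' : Rabs (Xdot (T x) + hh * (Derive T x0 * g x0)) < eps * hh).
    { replace (Xdot (T x) + hh * (Derive T x0 * g x0)) with
        (hh * ((Xdot (T x) - 0) / hh - Derive T x0 * - g x0)) by (field; lra).
      rewrite Rabs_mult, Rabs_right by lra. nra. }
    assert (E3' : Rabs (hh * (du (T x) - du T0)) <= eps * hh).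
    { rewrite Rabs_mult, Rabs_right by lra. nra. }
    assert (Hsum : hh * (du T0 - Derive T x0 * g x0) =
       - ((0 - Xdot (T x) - (x - x0) * du (T x)) + (Xdot (T x) + hh * (Derive T x0 * g x0))
          + hh * (du (T x) - du T0))).
    { unfold x. ring. }
    assert (Habs : Rabs (hh * (du T0 - Derive T x0 * g x0)) <= 3 * eps * hh).
    { rewrite Hsum, Rabs_Ropp.
      eapply Rle_trans. apply Rabs_triang. 
      assert (Rabs ((0 - Xdot (T x) - (x - x0) * du (T x)) + (Xdot (T x) + hh * (Derive T x0 * g x0)))
        <= Rabs (0 - Xdot (T x) - (x - x0) * du (T x)) + Rabs (Xdot (T x) + hh * (Derive T x0 * g x0)))
        by apply Rabs_triang.
      lra. }
    rewrite Rabs_mult, (Rabs_right hh) in Habs by lra.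
    apply (Rmult_le_reg_r hh); lra. }
  assert (Hc : c = - Derive T x0).
  { rewrite HduT0 in Hkey. apply (Rmult_eq_reg_r (g x0)); auto. lra. }
  assert (Hts : exists ts, Xdot ts <> 0).
  { apply NNPP. intros Hno.
    assert (Hz : forall t, Xdot t = 0).
    { intros t. apply NNPP. intros H; apply Hno; exists t; exact H. }
    assert (E1 : Derive Xdot 0 = - G 0) by (apply is_derive_unique, HXdd).
    assert (E2 : Derive Xdot 0 = 0).
    { apply is_derive_unique. eapply D_ext; [|apply (D_const 0 0)]. intros t; cbv beta; rewrite Hz; reflexivity. }
    apply Hgx0. unfold G in E1. rewrite HX00 in E1. lra. }
  destruct Hts as [ts Hts].
  assert (HVc : forall z, hx0 <= z <= x0 -> continuous (potential g) z).
  { intros z Hz. apply (der_cont _ _ _ (V_derive g a b Ha0 H0b Hgc z (HK0 z Hz))). }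
  destruct (@bounded_continuity R_AbsRing R_NormedModule (potential g) hx0 x0 HVc) as [Mv HMv].
  set (Bv := 1 + 2 * (Rabs (potential g x0) + Mv)).
  assert (HBv : forall t, Rabs (Xdot t) <= Bv).
  { intros t. destruct (Hrange0 t) as [Hr HE].
    assert (HV1 := HMv (X t x0) Hr). change (norm (potential g (X t x0))) with (Rabs (potential g (X t x0))) in HV1.
    assert (Hv0 : 0 <= Rabs (potential g (X t x0))) by apply Rabs_pos.
    assert (Hx0a : potential g x0 <= Rabs (potential g x0)) by apply Rle_abs.
    assert (Hva : - Rabs (potential g (X t x0)) <= potential g (X t x0)) by (apply (Rabs_def2b (potential g (X t x0)) (Rabs (potential g (X t x0)))); lra).
    assert (Hsq : Xdot t ^ 2 <= Bv - 1).
    { unfold Bv. change (Derive (fun t => X t x0) t) with (Xdot t) in HE. lra. }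
    assert (0 <= Rabs (potential g x0)) by apply Rabs_pos. apply sq_abs_le. unfold Bv; lra.
    assert (1 <= Bv) by (unfold Bv; lra). assert (Bv <= Bv ^ 2) by (simpl; nra). lra. }
  assert (Hper : forall y dy, (forall t, is_derive y t (dy t) /\ is_derive dy t (- q t * y t)) ->
             forall t, y (t + T0) = y t + y 0 * c * Xdot t).
  { intros y dy Hy t. rewrite (Hrepr y dy Hy (t + T0)), (Hrepr y dy Hy t), Hshift, (HpXd t). match goal with |- ?a = ?b => change (@eq R a b) end. ring. }
  split.
  - destruct (Req_dec c 0) as [c0|cn].
    + left. intros y [dy Hy] t. rewrite (Hper y dy Hy t), c0. ring.
    + right. intros y [dy Hy]. split.
      * intros Hunb [k Hk]. apply Hunb. exists (Rabs k * Bv). intros t. rewrite Hk, Rabs_mult.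
        apply Rmult_le_compat_l. apply Rabs_pos. apply HBv.
      * intros Hnp [Mb HMb]. destruct (Req_dec (y 0) 0) as [y00|y0n].
        -- apply Hnp. exists (dy 0 / - g x0). intros t. rewrite (Hrepr y dy Hy t), y00. ring.
        -- assert (Hgr := lin_growth y Xdot T0 (y 0 * c) (Hper y dy Hy) HpXd).
           assert (Hpos : 0 < Rabs (y 0 * c * Xdot ts)).
           { apply Rabs_pos_lt. apply Rmult_integral_contrapositive; split; auto.
             all: try (apply Rmult_integral_contrapositive; split; auto). }
           assert (HMb0 : 0 <= Mb) by (eapply Rle_trans; [apply Rabs_pos|apply (HMb 0)]).
           destruct (INR_archimed _ (2 * Mb) Hpos) as [n Hn].
           assert (H1 := HMb (ts + INR n * T0)). rewrite Hgr in H1.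
           assert (H2 := HMb ts).
           assert (H3 : Rabs (INR n * (y 0 * c) * Xdot ts) <= Rabs (y ts + INR n * (y 0 * c) * Xdot ts) + Rabs (y ts)).
           { replace (INR n * (y 0 * c) * Xdot ts) with ((y ts + INR n * (y 0 * c) * Xdot ts) + - y ts) at 1 by ring.
             rewrite <- (Rabs_Ropp (y ts)). apply Rabs_triang. }
           rewrite Rmult_assoc, Rabs_mult, (Rabs_right (INR n)) in H3 by (apply Rle_ge, pos_INR).
           rewrite <- Rmult_assoc in H3. lra.
  - split.
    + intros Hall.
      assert (Hpu := Hall u (ex_intro _ du Hu) ts).
      rewrite Hshift in Hpu.
      assert (c = 0).
      { apply (Rmult_eq_reg_r (Xdot ts)); auto. lra. }
      lra.
    + intros HD y [dy Hy] t. rewrite (Hper y dy Hy t). rewrite Hc, HD. ring.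
Qed.
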